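(* Let $w_1>w_2>\cdots>w_t$ and $u_1,\dots,u_t$ be positive integers, and let $\mathcal{S}=\sum_{i=1}^t w_i$ and $\mathcal{T}=\sum_{i=1}^t u_iw_i$. Suppose that every positive integer up to $\mathcal{S}$ is a sum of a subset of $\{w_1,\dots,w_t\}$. Then every integer $m$ with $0\le m\le \mathcal{T}$ can be written as $m=\sum_{i=1}^t a_iw_i$ with integers $0\le a_i\le u_i$. *)

(* Defs.v *)
From mathcomp Require Import all_boot.
Set Implicit Arguments. Unset Strict Implicit. Unset Printing Implicit Defensive.

(* Main.v *)
Require Import Defs.
From mathcomp Require Import all_boot.
From mathcomp Require Import zify.

Lemma small_case (t : nat) (w : 'I_t -> nat)
  (hsub : forall n, 0 < n -> n <= \sum_(i < t) w i ->
            exists A : {set 'I_t}, n = \sum_(i in A) w i) m :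
  m <= \sum_(i < t) w i ->
  exists a : 'I_t -> nat, (forall i, a i <= 1) /\ m = \sum_(i < t) a i * w i.
Proof.
move=> hm; case: (posnP m) => [->|mpos].
  exists (fun _ => 0); split=> // ; by rewrite big1.
have [A ->] := hsub m mpos hm.
exists (fun i => nat_of_bool (i \in A)); split; first by move=> i; case: (i \in A).
rewrite big_mkcond /=; apply: eq_bigr => i _; by case: (i \in A); rewrite ?mul1n ?mul0n.
Qed.

Lemma key (t : nat) (w : 'I_t -> nat)
  (hsub : forall n, 0 < n -> n <= \sum_(i < t) w i ->
            exists A : {set 'I_t}, n = \sum_(i in A) w i) N :
  forall u : 'I_t -> nat, (forall i, 0 < u i) -> \sum_(i < t) u i <= N ->
  forall m, m <= \sum_(i < t) u i * w i ->
    exists a : 'I_t -> nat,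
      (forall i, a i <= u i) /\ m = \sum_(i < t) a i * w i.
Proof.
elim: N => [|N IH] u hu hN m hm.
  case: (pickP (fun j => 1 < u j)) => [j /= hj|hn].
    move: hN; rewrite (bigD1 j) //=; lia.
  have u1 : forall i, u i = 1 by move=> i; have := hn i; have := hu i; simpl; lia.
  have : m <= \sum_(i < t) w i.
    by rewrite (eq_bigr (fun i => u i * w i)) // => i _; rewrite u1 mul1n.
  move/(@small_case _ _ hsub _) => [a [ha ->]]; exists a; split => // i; by rewrite u1.
case: (pickP (fun j => 1 < u j)) => [j /= hj|hn]; last first.
  have u1 : forall i, u i = 1 by move=> i; have := hn i; have := hu i; simpl; lia.
  have : m <= \sum_(i < t) w i.
    by rewrite (eq_bigr (fun i => u i * w i)) // => i _; rewrite u1 mul1n.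
  move/(@small_case _ _ hsub _) => [a [ha ->]]; exists a; split => // i; by rewrite u1.
case: (ltnP m (w j)) => hmw.
  have : m <= \sum_(i < t) w i by rewrite (bigD1 j) //=; lia.
  move/(@small_case _ _ hsub _) => [a [ha ->]]; exists a; split => // i.
  by apply: leq_trans (ha i) (hu i).
pose u' := fun i => if i == j then (u j).-1 else u i.
have hu' : forall i, 0 < u' i.
  by move=> i; rewrite /u'; case: eqP => _ //; lia.
have E1 : \sum_(i < t) u i = (u j) + \sum_(i < t | i != j) u' i.
  rewrite (bigD1 j) //=; congr (_ + _); apply: eq_bigr => i /negbTE.
  by rewrite /u' => ->.
have E2 : \sum_(i < t) u' i = (u j).-1 + \sum_(i < t | i != j) u' i.
  by rewrite (bigD1 j) //= /u' eqxx.
have E3 : \sum_(i < t) u i * w i = (u j) * w j + \sum_(i < t | i != j) u' i * w i.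
  rewrite (bigD1 j) //=; congr (_ + _); apply: eq_bigr => i /negbTE.
  by rewrite /u' => ->.
have E4 : \sum_(i < t) u' i * w i = (u j).-1 * w j + \sum_(i < t | i != j) u' i * w i.
  by rewrite (bigD1 j) //= /u' eqxx.
have hN' : \sum_(i < t) u' i <= N by lia.
have hm' : m - w j <= \sum_(i < t) u' i * w i.
  rewrite E4; move: hm; rewrite E3.
  have -> : u j * w j = (u j).-1 * w j + w j by rewrite -{1}(prednK (hu j)) mulSn addnC.
  lia.
have [a [ha Ha]] := IH u' hu' hN' _ hm'.
exists (fun i => a i + (i == j)); split.
  move=> i; have := ha i; rewrite /u'; case: eqP => [->|_] /=; last by rewrite addn0.
  by lia.
rewrite (bigD1 j) //= eqxx.
rewrite (eq_bigr (fun i => a i * w i)); last by move=> i /negbTE ->; rewrite addn0.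
move: Ha; rewrite (bigD1 j) //= => Ha.
rewrite mulnDl mul1n; lia.
Qed.

(* Indices i = 1..t of the paper are the ordinals 'I_t = {0,...,t-1}. *)
Theorem theorem5p5 (t : nat) (w u : 'I_t -> nat)
  (hw_pos : forall i, 0 < w i)
  (hu_pos : forall i, 0 < u i)
  (hw_dec : forall i j : 'I_t, (i < j)%N -> w j < w i)
  (hsub : forall n, 0 < n -> n <= \sum_(i < t) w i ->
            exists A : {set 'I_t}, n = \sum_(i in A) w i) :
  forall m, m <= \sum_(i < t) u i * w i ->
    exists a : 'I_t -> nat,
      (forall i, a i <= u i) /\ m = \sum_(i < t) a i * w i.
Proof.
exact: (@key _ _ hsub _ u hu_pos (leqnn _)).
Qed.
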